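(* Let $W:\mathbb{R}\to[0,\infty]$ and constants $a,C_1,C_2>0$ be such that for all $t>0$, $B_W(at)\subset C_1t\,B_1^1+C_2\sqrt{t}\,B_2^1$. Then for every $n\ge1$ and all $t>0$, $B_{W_n}(at)\subset C_1t\,B_1^n+C_2\sqrt{t}\,B_2^n$, where $W_n(x)=\sum_{i=1}^n W(x_i)$ for $x\in\mathbb{R}^n$.
   Context: For $V:\mathbb{R}^m\to[0,\infty]$, $B_V(t)=\{x\in\mathbb{R}^m: V(x)\le t\}$. $B_p^n=\{x\in\mathbb{R}^n:(\sum_i|x_i|^p)^{1/p}\le1\}$ is the unit ball of $\ell_p^n$; $+$ is Minkowski sum and $sB$ is the dilate of $B$ by $s$. *)

(* Defs.v *)
From mathcomp Require Import all_boot all_order all_algebra.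
From mathcomp Require Import all_classical all_reals.
Set Implicit Arguments. Unset Strict Implicit. Unset Printing Implicit Defensive.
Import Order.TTheory GRing.Theory Num.Theory.
Local Open Scope ring_scope.
Local Open Scope classical_set_scope.

Definition sublevel (R : realType) (T : Type) (V : T -> \bar R) (t : R) : set T :=
  [set x | (V x <= t%:E)%E].

Definition ball_l1 (R : realType) (n : nat) : set ('I_n -> R) :=
  [set x | \sum_(i < n) `|x i| <= 1].

Definition ball_l2 (R : realType) (n : nat) : set ('I_n -> R) :=
  [set x | Num.sqrt (\sum_(i < n) x i ^+ 2) <= 1].

Definition dilate (R : realType) (n : nat) (s : R) (B : set ('I_n -> R)) :
  set ('I_n -> R) := [set x | exists2 u, B u & x = (fun i => s * u i)].

Definition msum (R : realType) (n : nat) (A B : set ('I_n -> R)) :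
  set ('I_n -> R) := [set x | exists y z, A y /\ B z /\ x = (fun i => y i + z i)].

Definition tensW (R : realType) (n : nat) (W : R -> \bar R) (x : 'I_n -> R) : \bar R :=
  (\sum_(i < n) W (x i))%E.

(* Main.v *)
Require Import Defs.
From mathcomp Require Import all_boot all_order all_algebra.
From mathcomp Require Import all_classical all_reals.
From mathcomp Require Import ring lra.
Import Order.TTheory GRing.Theory Num.Theory.
Local Open Scope ring_scope.
Local Open Scope classical_set_scope.

Lemma pt_pos (R : realType) (W : R -> \bar R) (a C1 C2 : R)
  (W0 : forall x, (0 <= W x)%E) (a0 : 0 < a) (c10 : 0 < C1) (c20 : 0 < C2)
  (H : forall t : R, 0 < t ->
     (fun x : R => (fun _ : 'I_1 => x)) @` sublevel W (a * t)
       `<=` msum (dilate (C1 * t) (@ball_l1 R 1))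
                 (dilate (C2 * Num.sqrt t) (@ball_l2 R 1))) (s x : R) : 0 < s -> (W x <= (a * s)%:E)%E ->
  exists p q, x = p + q /\ `|p| <= C1 * s /\ q ^+ 2 <= C2 ^+ 2 * s.
Proof.
move=> s0 Wx.
have : msum (dilate (C1 * s) (@ball_l1 R 1))
                 (dilate (C2 * Num.sqrt s) (@ball_l2 R 1)) (fun _ => x).
  apply: (H s s0 (fun _ => x)); by exists x.
move=> [y [z [[u Hu Ey] [[v Hv Ez] E]]]].
subst y z.
have Ex := congr1 (fun f => f ord0) E; simpl in Ex.
rewrite /ball_l1 /= big_ord1 in Hu.
rewrite /ball_l2 /= big_ord1 sqrtr_sqr in Hv.
exists (C1 * s * u ord0), (C2 * Num.sqrt s * v ord0); split => //; split.
  have hc : 0 <= C1 * s by rewrite mulr_ge0 // ltW.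
  rewrite normrM (ger0_norm hc); exact: ler_piMr.
have Hs := sqr_sqrtr (ltW s0).
have hv : v ord0 ^+ 2 <= 1.
  by rewrite -real_normK ?num_real // expr_le1.
rewrite !exprMn Hs.
have hc : 0 <= C2 ^+ 2 * s by rewrite mulr_ge0 ?sqr_ge0 // ltW.
exact: ler_piMr.
Qed.

Lemma pt_zero (R : realType) (W : R -> \bar R) (a C1 C2 : R)
  (W0 : forall x, (0 <= W x)%E) (a0 : 0 < a) (c10 : 0 < C1) (c20 : 0 < C2)
  (H : forall t : R, 0 < t ->
     (fun x : R => (fun _ : 'I_1 => x)) @` sublevel W (a * t)
       `<=` msum (dilate (C1 * t) (@ball_l1 R 1))
                 (dilate (C2 * Num.sqrt t) (@ball_l2 R 1))) (x : R) : (W x <= 0%:E)%E -> x = 0.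
Proof.
move=> Wx.
have key : forall r, 0 < r -> r <= 1 -> `|x| <= (C1 + C2) * r.
  move=> r r0 r1.
  have r20 : 0 < r ^+ 2 by apply: exprn_gt0.
  have Wr : (W x <= (a * r ^+ 2)%:E)%E.
    by apply: (le_trans Wx); rewrite lee_fin mulr_ge0 // ltW.
  have [p [q [-> [hp hq]]]] := @pt_pos R W a C1 C2 W0 a0 c10 c20 H (r ^+ 2) x r20 Wr.
  have hq' : `|q| <= C2 * r.
    have h0 : 0 <= C2 * r by rewrite mulr_ge0 // ltW.
    by rewrite -(ger0_norm h0) -!sqrtr_sqr ler_sqrt ?sqr_ge0 // exprMn.
  have hrr : r ^+ 2 <= r by rewrite expr2 ler_piMl // ltW.
  have h1 : C1 * r ^+ 2 <= C1 * r by rewrite ler_wpM2l // ltW.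
  have h2 := ler_normD p q.
  lra.
apply/eqP; rewrite -normr_eq0; apply/negPn/negP => xn0.
have [m mE] : exists m : R, `|x| = m by eexists.
have mge : 0 <= m by rewrite -mE normr_ge0.
rewrite mE in key xn0.
have m0 : 0 < m by rewrite lt_def xn0 mge.
have D0 : 0 < 2 * (C1 + C2) + m by lra.
have r0 : 0 < m / (2 * (C1 + C2) + m) by rewrite divr_gt0.
have r1 : m / (2 * (C1 + C2) + m) <= 1 by rewrite ler_pdivrMr // mul1r; lra.
have := key _ r0 r1.
rewrite mulrA ler_pdivlMr // => hk.
have e1 : 0 < m * C1 by rewrite mulr_gt0.
have e2 : 0 < m * C2 by rewrite mulr_gt0.
have e3 : 0 <= m * m by rewrite mulr_ge0 // ltW.
lra.
Qed.

Theorem lemma7 (R : realType) (W : R -> \bar R) (a C1 C2 : R) :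
  (forall x, (0 <= W x)%E) ->
  0 < a -> 0 < C1 -> 0 < C2 ->
  (forall t : R, 0 < t ->
     (fun x : R => (fun _ : 'I_1 => x)) @` sublevel W (a * t)
       `<=` msum (dilate (C1 * t) (@ball_l1 R 1))
                 (dilate (C2 * Num.sqrt t) (@ball_l2 R 1))) ->
  forall (n : nat), (0 < n)%N ->
  forall t : R, 0 < t ->
    sublevel (tensW W) (a * t)
      `<=` msum (dilate (C1 * t) (@ball_l1 R n))
                (dilate (C2 * Num.sqrt t) (@ball_l2 R n)).
Proof.
move=> W0 a0 c10 c20 H n n0 t t0 x Hx.
rewrite /sublevel /tensW /= in Hx.
have Wle : forall i, (W (x i) <= (a * t)%:E)%E.
  move=> i; apply: le_trans Hx; rewrite (bigD1 i) //=; apply: leeDl.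
  by apply: sume_ge0 => j _; exact: W0.
have fin : forall i, W (x i) = (fine (W (x i)))%:E.
  move=> i; rewrite fineK // ge0_fin_numE //; exact: le_lt_trans (Wle i) (ltry _).
pose w := fun i => fine (W (x i)).
have w0 : forall i, 0 <= w i by move=> i; rewrite -lee_fin /w -fin.
have sw : \sum_i w i <= a * t.
  rewrite -lee_fin -sumEFin; apply: le_trans Hx; rewrite le_eqVlt; apply/orP; left.
  by apply/eqP; apply: eq_bigr => i _; rewrite /w -fin.
have pq : forall i, exists pq : R * R, x i = pq.1 + pq.2 /\
    `|pq.1| <= C1 * (w i / a) /\ pq.2 ^+ 2 <= C2 ^+ 2 * (w i / a).
  move=> i; have := w0 i; rewrite le_eqVlt => /orP [/eqP wi0|wpos].
    have xi0 : x i = 0.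
      apply: (@pt_zero _ _ _ _ _ W0 a0 c10 c20 H); rewrite fin -/(w i) -wi0 //.
    exists (0, 0) => /=; rewrite -wi0 xi0 mul0r mulr0 normr0 addr0 expr0n /= mulr0.
    by split.
  have sp : 0 < w i / a by rewrite divr_gt0.
  have Wi : (W (x i) <= (a * (w i / a))%:E)%E.
    by rewrite mulrC divfK ?gt_eqF // fin.
  have [p [q [e1 [e2 e3]]]] := @pt_pos _ _ _ _ _ W0 a0 c10 c20 H _ _ sp Wi.
  by exists (p, q).
case: (choice pq) => f Hf.
have st0 : 0 < Num.sqrt t by rewrite sqrtr_gt0.
exists (fun i => (f i).1), (fun i => (f i).2); split; [|split].
- exists (fun i => (f i).1 / (C1 * t)).
  + rewrite /ball_l1 /=.
    apply: (@le_trans _ _ (\sum_i w i / (a * t))).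
      apply: ler_sum => i _.
      rewrite normrM (@ger0_norm _ (C1 * t)^-1); last by rewrite invr_ge0 mulr_ge0 // ltW.
      apply: (@le_trans _ _ (C1 * (w i / a) / (C1 * t))).
        apply: ler_wpM2r; first by rewrite invr_ge0 mulr_ge0 // ltW.
        by case: (Hf i) => _ [].
      rewrite le_eqVlt; apply/orP; left; apply/eqP; field.
      by rewrite !gt_eqF.
    by rewrite -mulr_suml ler_pdivrMr ?mulr_gt0 // mul1r.
  + apply/funext => i /=; field.
    by rewrite !gt_eqF.
- exists (fun i => (f i).2 / (C2 * Num.sqrt t)).
  + rewrite /ball_l2 /= -sqrtr1 ler_sqrt //.
    apply: (@le_trans _ _ (\sum_i w i / (a * t))).
      apply: ler_sum => i _.
      rewrite expr_div_n exprMn (sqr_sqrtr (ltW t0)).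

      apply: (@le_trans _ _ (C2 ^+ 2 * (w i / a) / (C2 ^+ 2 * t))).
        apply: ler_wpM2r; first by rewrite invr_ge0 mulr_ge0 ?sqr_ge0 // ltW.
        by case: (Hf i) => _ [].
      rewrite le_eqVlt; apply/orP; left; apply/eqP; field.
      by rewrite !gt_eqF.
    by rewrite -mulr_suml ler_pdivrMr ?mulr_gt0 // mul1r.
  + apply/funext => i /=; field.
    by rewrite !gt_eqF.
- by apply/funext => i; case: (Hf i).
Qed.
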